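(* Let $A\in\mathbb{R}^{n\times n}$ be irreducible and nonnegative. Then $r\big((1-t)A+tA^{\top}\big)$ is constant in $t\in[0,1]$ if and only if the Perron vector of $A+A^{\top}$ lies in the null space of $A-A^{\top}$.
   Context: $r(M)$ denotes the spectral radius of $M$. The Perron vector of an irreducible nonnegative matrix is its positive eigenvector (unique up to scaling) for the eigenvalue equal to its spectral radius. *)

(* Defs.v *)
From HB Require Import structures.
From mathcomp Require Import all_boot all_order all_algebra.
From mathcomp Require Import complex.
Set Implicit Arguments. Unset Strict Implicit. Unset Printing Implicit Defensive.
Import Order.TTheory GRing.Theory Num.Theory.
Local Open Scope ring_scope.

(* Real matrices are taken over an arbitrary real closed field R
   (e.g. the reals); complex eigenvalues live in R[i] = complex R. *)

(* The (complex) eigenvalues of M, listed with algebraic multiplicity: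
   the roots of the characteristic polynomial of M viewed over R[i]. *)
Definition eigenvalues_C (R : rcfType) (n : nat) (M : 'M[R]_n) : seq R[i] :=
  sval (closed_field_poly_normal (char_poly (map_mx (real_complex R) M))).

Definition spectral_radius (R : rcfType) (n : nat) (M : 'M[R]_n) : R :=
  \big[Num.max/0]_(z <- eigenvalues_C M) Normc.normc z.

Definition nonneg_mx (R : rcfType) (n : nat) (M : 'M[R]_n) : Prop :=
  forall i j, 0 <= M i j.

(* Irreducibility: there is no nonempty proper subset S of indices with
   M i j = 0 for all i in S, j not in S (equivalently, no permutation
   similarity brings M to block upper triangular form). *)
Definition irreducible_mx (R : rcfType) (n : nat) (M : 'M[R]_n) : Prop :=
  forall S : {set 'I_n}, S != set0 -> S != setT ->
    exists i, exists j, [/\ i \in S, j \notin S & M i j != 0].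

Definition perron_vector (R : rcfType) (n : nat) (M : 'M[R]_n) (x : 'cV[R]_n) : Prop :=
  (forall i, 0 < x i 0) /\ M *m x = spectral_radius M *: x.

(* Main.v *)
Require Import Defs.
From HB Require Import structures.
From mathcomp Require Import all_boot all_order all_algebra.
From mathcomp Require Import complex.
From mathcomp Require Import ring lra.
Import Order.TTheory GRing.Theory Num.Theory.
Local Open Scope ring_scope.

Set Implicit Arguments. Unset Strict Implicit. Unset Printing Implicit Defensive.

Section Gen.
Variable R : rcfType.
Local Notation C := (R[i]).
Local Notation toC := (real_complex R).

Lemma char_poly_tr n (A : 'M[R[i]]_n) : char_poly A^T = char_poly A.
Proof.
rewrite /char_poly -det_tr; congr (\det _).
by apply/matrixP => i j; rewrite /char_poly_mx !mxE eq_sym.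
Qed.

Lemma bigmax_ge (s : seq C) z : z \in s ->
  Normc.normc z <= \big[Num.max/0]_(w <- s) Normc.normc w.
Proof.
elim: s => [//|a s IH]; rewrite inE big_cons le_max => /orP[/eqP->|/IH->];
  by rewrite ?lexx ?orbT.
Qed.

Lemma bigmax_le (s : seq C) c : 0 <= c -> (forall z, z \in s -> Normc.normc z <= c) ->
  \big[Num.max/0]_(w <- s) Normc.normc w <= c.
Proof.
move=> c0; elim: s => [|a s IH] H; first by rewrite big_nil.
rewrite big_cons ge_max H ?mem_head //= IH // => z zs; apply: H.
by rewrite inE zs orbT.
Qed.

Lemma normc_ge0 (z : C) : 0 <= Normc.normc z.
Proof. by case: z => a b /=; rewrite sqrtr_ge0. Qed.

Lemma bigmax_att (s : seq C) : \big[Num.max/0]_(w <- s) Normc.normc w = 0 \/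
  exists2 z, z \in s & \big[Num.max/0]_(w <- s) Normc.normc w = Normc.normc z.
Proof.
elim: s => [|a s IH]; first by left; rewrite big_nil.
rewrite big_cons; right.
set m := \big[Num.max/0]_(w <- s) Normc.normc w in IH *.
case: (leP (Normc.normc a) m) => H.
- case: IH => [E|[z zs E]].
  + exists a; rewrite ?mem_head //; apply/eqP; rewrite eq_le H andbT.
    by rewrite E normc_ge0.
  + by exists z; rewrite ?inE ?zs ?orbT.
- by exists a; rewrite ?mem_head.
Qed.

Lemma eigC_root n (B : 'M[R]_n) z :
  (z \in eigenvalues_C B) = root (char_poly (map_mx toC B)) z.
Proof.
rewrite /eigenvalues_C; case: closed_field_poly_normal => s /= Hs.
have := char_poly_monic (map_mx toC B); rewrite qualifE => /eqP L.
by rewrite Hs L scale1r root_prod_XsubC.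
Qed.

Lemma normcC (c : R) : Normc.normc (toC c) = `|c|.
Proof. by rewrite /= expr0n /= addr0 sqrtr_sqr. Qed.

Lemma normc_sum_le (I : finType) (f : I -> C) (a : I -> R) :
  (forall i, 0 <= a i) ->
  Normc.normc (\sum_i f i * toC (a i)) <= \sum_i Normc.normc (f i) * a i.
Proof.
move=> a0; rewrite -lecR rmorph_sum /=.
have -> : toC (Normc.normc (\sum_i f i * toC (a i))) = `|\sum_i f i * toC (a i)| by [].
apply: le_trans (ler_norm_sum _ _ _) _; apply: ler_sum => i _.
rewrite normrM rmorphM /= (ger0_norm (x := toC (a i))) ?ler0c //.
Qed.


Lemma eig_rowvec n (B : 'M[R]_n) z : z \in eigenvalues_C B ->
  exists2 v : 'rV[C]_n, v *m map_mx toC B = z *: v & v != 0.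
Proof. by rewrite eigC_root -eigenvalue_root_char => /eigenvalueP. Qed.

Lemma ge_eig n (B : 'M[R]_n) c (x : 'cV[R]_n) :
  x != 0 -> B *m x = c *: x -> c <= spectral_radius B.
Proof.
move=> x0 Bx.
have: toC c \in eigenvalues_C B.
  rewrite eigC_root -char_poly_tr -eigenvalue_root_char; apply/eigenvalueP.
  exists (map_mx toC x)^T.
    apply: trmx_inj; rewrite trmx_mul trmxK linearZ /= trmxK.
    by rewrite -map_mxM Bx map_mxZ.
  by rewrite trmx_eq0 map_mx_eq0.
move/bigmax_ge; rewrite normcC => H; exact: le_trans (ler_norm c) H.
Qed.

Lemma exists_nz n (v : 'rV[C]_n) : v != 0 -> exists j, v 0 j != 0.
Proof.
move=> v0; case/boolP: [exists j, v 0 j != 0] => [/existsP//|/existsPn H].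
case/negP: v0; apply/eqP/rowP => j; rewrite mxE; apply/eqP.
by move: (H j); rewrite negbK.
Qed.

Lemma le_eig n (B : 'M[R]_n) c (x : 'cV[R]_n) : nonneg_mx B ->
  (forall i, 0 < x i 0) -> B *m x = c *: x -> 0 <= c -> spectral_radius B <= c.
Proof.
move=> HB xpos Bx c0; apply: bigmax_le => // z /eig_rowvec [v Hv v0].
pose nv i := Normc.normc (v 0 i).
have key j : Normc.normc z * nv j <= \sum_i nv i * B i j.
  rewrite /nv -Normc.normcM.
  have -> : z * v 0 j = \sum_i v 0 i * toC (B i j).
    have := congr1 (fun M : 'M[C]_(1,n) => M 0 j) Hv; rewrite !mxE => <-.
    by apply: eq_bigr => i _; rewrite mxE.
  by apply: normc_sum_le => i; exact: HB.
have [j vj] := exists_nz v0.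
have s0 : 0 < \sum_i nv i * x i 0.
  have tj : 0 < nv j * x j 0.
    rewrite mulr_gt0 // lt_def normc_ge0 andbT.
    by apply: contra vj => /eqP/Normc.eq0_normc ->.
  rewrite (bigD1 j) //=; apply: (lt_le_trans tj); rewrite lerDl.
  by apply: sumr_ge0 => i _; rewrite mulr_ge0 ?normc_ge0 ?ltW.
have E : \sum_j (\sum_i nv i * B i j) * x j 0 = c * \sum_i nv i * x i 0.
  rewrite mulr_sumr; under eq_bigr do rewrite mulr_suml.
  rewrite exchange_big /=; apply: eq_bigr => i _.
  have := congr1 (fun M : 'M[R]_(n,1) => M i 0) Bx; rewrite !mxE => Hi.
  by rewrite mulrCA -Hi mulr_sumr; apply: eq_bigr => k _; rewrite mulrA.
rewrite -(ler_pM2r s0) -E mulr_sumr.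
apply: ler_sum => k _; rewrite mulrA; apply: ler_wpM2r; first exact: ltW.
exact: key.
Qed.

Lemma pe n (B : 'M[R]_n) c (x : 'cV[R]_n) : (0 < n)%N -> nonneg_mx B ->
  (forall i, 0 < x i 0) -> B *m x = c *: x -> spectral_radius B = c.
Proof.
move=> n0 HB xpos Bx; pose i0 := Ordinal n0.
have c0 : 0 <= c.
  have := congr1 (fun M : 'M[R]_(n,1) => M i0 0) Bx; rewrite !mxE => Hi.
  rewrite -(pmulr_lge0 _ (xpos i0)) -Hi.
  by apply: sumr_ge0 => j _; apply: mulr_ge0; [exact: HB | exact: ltW].
apply/eqP; rewrite eq_le (le_eig HB xpos Bx c0) /=; apply: ge_eig Bx.
by apply/negP => /eqP x0; have := xpos i0; rewrite x0 mxE ltxx.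
Qed.


Lemma key n (a : 'I_n -> 'I_n -> R) (x u : 'I_n -> R) lam :
  (forall i j, 0 <= a i j) ->
  (forall S : {set 'I_n}, S != set0 -> S != setT ->
     exists i, exists j, [/\ i \in S, j \notin S & a i j != 0]) ->
  (forall i, 0 < x i) ->
  (forall i, \sum_j (a i j + a j i) * x j = (lam + lam) * x i) ->
  (forall i, 0 <= u i) -> (exists i, u i != 0) ->
  (forall j, lam * u j <= \sum_i u i * a i j) ->
  forall j, \sum_i x i * a i j = lam * x j.
Proof.
move=> a0 irr xpos Hx u0 [i1 ui1] Hu.
pose v i := u i / x i.
have uv i : u i = v i * x i by rewrite /v divfK // gt_eqF.
pose T := \sum_i \sum_j a i j * x i * x j * (v i - v j) ^+ 2.
pose G := \sum_i u i * (\sum_j u j * a j i - lam * u i).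
pose f i j := a i j * x i * x j * v j ^+ 2 - (a i j * x i * x j * v i * v j) *+ 2.
have Z : \sum_i \sum_j (f i j - f j i) = 0.
  under eq_bigr do rewrite sumrB.
  by rewrite sumrB exchange_big subrr.
have H2 i : (lam + lam) * u i ^+ 2 = \sum_j v i ^+ 2 * x i * (a i j + a j i) * x j.
  rewrite uv; transitivity (v i ^+ 2 * x i * ((lam + lam) * x i)); first ring.
  by rewrite -Hx mulr_sumr; apply: eq_bigr => j _; ring.
have ET : T + (G + G) = \sum_i \sum_j (f i j - f j i).
  rewrite /T /G -big_split -big_split /=; apply: eq_bigr => i _.
  have -> : u i * (\sum_j u j * a j i - lam * u i) + u i * (\sum_j u j * a j i - lam * u i)
     = (\sum_j u i * (u j * a j i)) *+ 2 - (lam + lam) * u i ^+ 2.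
    rewrite -mulr_sumr; ring.
  rewrite H2 -sumrMnl -sumrB -big_split /=; apply: eq_bigr => j _.
  rewrite /f !uv; ring.
have T0 : 0 <= T.
  apply: sumr_ge0 => i _; apply: sumr_ge0 => j _.
  by rewrite mulr_ge0 ?sqr_ge0 // !mulr_ge0 // ltW.
have G0 : 0 <= G.
  apply: sumr_ge0 => i _; rewrite mulr_ge0 // subr_ge0; exact: Hu.
have /eqP : T + (G + G) = 0 by rewrite ET Z.
rewrite paddr_eq0 ?addr_ge0 // => /andP[/eqP TZ].
rewrite paddr_eq0 // andbb => /eqP GZ.
have tnn i j : 0 <= a i j * x i * x j * (v i - v j) ^+ 2.
  by rewrite mulr_ge0 ?sqr_ge0 // !mulr_ge0 // ltW.
have Ti i : \sum_j a i j * x i * x j * (v i - v j) ^+ 2 = 0.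
  by apply: (psumr_eq0P _ TZ) => // k _; apply: sumr_ge0 => j _; exact: tnn.
have Tij i j : a i j != 0 -> v i = v j.
  move=> aij; have /eqP := @psumr_eq0P _ _ _ _ (fun j _ => tnn i j) (Ti i) j isT.
  by rewrite !mulf_eq0 (negbTE aij) (gt_eqF (xpos i)) (gt_eqF (xpos j)) /= orbb subr_eq0 => /eqP.
have Gi i : u i * (\sum_j u j * a j i - lam * u i) = 0.
  apply: (psumr_eq0P _ GZ) => // k _; rewrite mulr_ge0 // subr_ge0; exact: Hu.
pose S := [set i | v i == v i1].
have ST : S = setT.
  apply/eqP; apply/negPn/negP => ST.
  have S0 : S != set0 by apply/set0Pn; exists i1; rewrite inE.
  have [i [j [iS jS aij]]] := irr S S0 ST.
  by move: iS jS; rewrite !inE (Tij _ _ aij) => ->.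
have vc i : v i = v i1 by have := in_setT i; rewrite -ST inE => /eqP.
have c0 : 0 < v i1.
  rewrite /v divr_gt0 // lt_def ui1 u0 //.
move=> j.
have uj : u j = v i1 * x j by rewrite uv vc.
have /eqP := Gi j; rewrite uj; rewrite mulf_eq0 mulf_eq0 (gt_eqF c0) (gt_eqF (xpos j)) /= subr_eq0 => /eqP E.
apply: (mulfI (lt0r_neq0 c0)); rewrite /= mulrCA -E mulr_sumr.
by apply: eq_bigr => i _; rewrite uv vc mulrA.
Qed.


Definition dotc n (a b : 'rV[C]_n) := \sum_j a 0 j * (b 0 j)^*.

Lemma dotcE n (a b : 'rV[C]_n) : dotc a b = (a *m map_mx Num.conj b^T) 0 0.
Proof. by rewrite /dotc mxE; apply: eq_bigr => j _; rewrite !mxE. Qed.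

Lemma dotc_unitary n (a b : 'rV[C]_n) (U : 'M[C]_n) :
  U *m map_mx Num.conj U^T = 1%:M -> dotc (a *m U) (b *m U) = dotc a b.
Proof.
move=> UU; rewrite !dotcE trmx_mul map_mxM mulmxA -(mulmxA a) UU mulmx1 //.
Qed.

Lemma spec n (H : 'M[C]_n) : (0 < n)%N -> H \is hermsymmx ->
  exists d : R, (exists2 e : 'rV[C]_n, e *m H = toC d *: e & e != 0) /\
   forall v : 'rV[C]_n, toC d * dotc v v <= dotc (v *m H) v -> v *m H = toC d *: v.
Proof.
move=> n0 Hh.
have /orthomx_spectralP HP := hermitian_normalmx Hh.
have Pu := spectral_unitarymx H.
have Pun := spectral_unit H.
have Dr := hermitian_spectral_diag_real Hh.
set P := spectralmx H in HP Pu Pun; set D := spectral_diag H in HP Dr.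
have PP : P *m map_mx Num.conj P^T = 1%:M by apply/unitarymxP.
pose dk k := complex.Re (D 0 k).
have Dk k : D 0 k = toC (dk k) by rewrite /dk RRe_real //; exact: (mxOverP Dr).
have [k0 _ Hk0] := @arg_maxP _ _ _ (Ordinal n0) xpredT dk isT.
pose d := dk k0.
have Dle k : D 0 k <= toC d by rewrite Dk lecR; apply: Hk0.
have fromc (v : 'rV[C]_n) : (forall k, (v *m invmx P) 0 k * D 0 k = toC d * (v *m invmx P) 0 k) ->
    v *m H = toC d *: v.
  move=> Hc; rewrite HP !mulmxA.
  have -> : v *m invmx P *m diag_mx D = toC d *: (v *m invmx P).
    by apply/rowP => k; move: (Hc k); rewrite mul_mx_diag !mxE; apply.
  by rewrite -scalemxAl mulmxKV.
have Ev (v : 'rV[C]_n) : dotc (v *m H) v = \sum_k (v *m invmx P) 0 k * D 0 k * ((v *m invmx P) 0 k)^*.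
  rewrite -{2}(mulmxKV Pun v) HP !mulmxA dotc_unitary //.
  by rewrite /dotc; apply: eq_bigr => k _; rewrite mul_mx_diag mxE.
have Nv (v : 'rV[C]_n) : dotc v v = \sum_k (v *m invmx P) 0 k * ((v *m invmx P) 0 k)^*.
  by rewrite -{1 2}(mulmxKV Pun v) dotc_unitary.
exists d; split; last first.
  move=> v Hv; apply: fromc => k.
  set c := v *m invmx P.
  have tnn j : 0 <= (toC d - D 0 j) * (c 0 j * (c 0 j)^*).
    by rewrite mulr_ge0 ?mul_conjC_ge0 // subr_ge0.
  have S0 : \sum_k (toC d - D 0 k) * (c 0 k * (c 0 k)^*) = 0.
    apply/eqP; rewrite eq_le; apply/andP; split; last first.
      by apply: sumr_ge0 => j _; rewrite mulr_ge0 ?mul_conjC_ge0 // subr_ge0.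
    move: Hv; rewrite Ev Nv -subr_ge0 mulr_sumr -sumrB.
    rewrite -lerN2 oppr0 -sumrN; apply: le_trans; rewrite le_eqVlt; apply/orP; left.
    by apply/eqP; apply: eq_bigr => j _; rewrite /c; ring.
  have /eqP := @psumr_eq0P _ _ _ _ (fun j _ => tnn j) S0 k isT.
  rewrite mulf_eq0 mul_conjC_eq0 subr_eq0 => /orP[/eqP <-|/eqP ->].
    by rewrite mulrC.
  by rewrite mul0r mulr0.
pose e := row k0 P.
have ce : e *m invmx P = delta_mx 0 k0 by rewrite -row_mul mulmxV // row1.
exists e.
  apply: fromc => k; rewrite ce mxE eqxx /=.
  by case: eqP => [->|_]; rewrite ?mul1r ?mulr1 ?mul0r ?mulr0 // Dk.
apply/negP => /eqP e0; move: ce; rewrite e0 mul0mx => /matrixP /(_ 0 k0).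
by rewrite !mxE !eqxx /= => /eqP; rewrite eq_sym oner_eq0.
Qed.


Lemma eig_abs n (B : 'M[R]_n) z (v : 'rV[C]_n) : nonneg_mx B ->
  v *m map_mx toC B = z *: v ->
  forall j, Normc.normc z * Normc.normc (v 0 j) <= \sum_i Normc.normc (v 0 i) * B i j.
Proof.
move=> HB Hv j; rewrite -Normc.normcM.
have -> : z * v 0 j = \sum_i v 0 i * toC (B i j).
  have := congr1 (fun M : 'M[C]_(1,n) => M 0 j) Hv; rewrite !mxE => <-.
  by apply: eq_bigr => i _; rewrite mxE.
by apply: normc_sum_le => i; exact: HB.
Qed.

Lemma conj_toC (r : R) : (toC r)^* = toC r.
Proof. by rewrite conj_Creal // complex_real. Qed.

Lemma perron_exists n (A : 'M[R]_n) : (0 < n)%N -> nonneg_mx A ->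
  irreducible_mx A -> exists x, perron_vector (A + A^T) x.
Proof.
move=> n0 A0 irr; set M := A + A^T.
have M0 : nonneg_mx M by move=> i j; rewrite !mxE addr_ge0.
have Msym i j : M i j = M j i by rewrite !mxE addrC.
have Hh : map_mx toC M \is hermsymmx.
  apply/is_hermitianmxP; rewrite expr0 scale1r; apply/matrixP => i j.
  by rewrite !mxE conj_toC addrC.
have [d [[e He e0] Heq]] := spec n0 Hh.
pose w j := Normc.normc (e 0 j).
pose wc := \row_j toC (w j).
have w0 j : 0 <= w j by exact: normc_ge0.
have wcH j : (wc *m map_mx toC M) 0 j = toC (\sum_i w i * M i j).
  by rewrite mxE rmorph_sum; apply: eq_bigr => i _; rewrite !mxE rmorphM.
have Hw : wc *m map_mx toC M = toC d *: wc.
  apply: Heq; rewrite /dotc mulr_sumr; apply: ler_sum => j _.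
  rewrite wcH !mxE conj_toC -!rmorphM lecR mulrA ler_wpM2r //.
  apply: le_trans (ler_wpM2r (w0 j) (ler_norm d)) _; rewrite -normcC.
  exact: eig_abs He j.
have Ew j : \sum_i w i * M i j = d * w j.
  have := congr1 (fun X : 'M[C]_(1,n) => X 0 j) Hw; rewrite wcH !mxE -rmorphM.
  exact: complexI.
have [j0 ej0] := exists_nz e0.
have wj0 : 0 < w j0.
  by rewrite lt_def w0 andbT; apply: contra ej0 => /eqP/Normc.eq0_normc ->.
have wpos i : 0 < w i.
  pose S := [set i | 0 < w i].
  suff ST : S = setT by have := in_setT i; rewrite -ST inE.
  apply/eqP; apply/negPn/negP => ST.
  have S0 : S != set0 by apply/set0Pn; exists j0; rewrite inE.
  have [k [j [kS jS akj]]] := irr S S0 ST.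
  move: kS jS; rewrite !inE => wk wj.
  have wjz : w j = 0 by apply/eqP; rewrite eq_le w0 andbT leNgt.
  have : 0 < \sum_i w i * M i j.
    rewrite (bigD1 k) //=; apply: (@lt_le_trans _ _ (w k * M k j)).
      rewrite mulr_gt0 // !mxE lt_def; apply/andP; split; last by rewrite addr_ge0.
      by rewrite paddr_eq0 // negb_and akj.
    by rewrite lerDl; apply: sumr_ge0 => i' _; rewrite mulr_ge0.
  by rewrite Ew wjz mulr0 ltxx.
exists (\col_i w i); split; first by move=> i; rewrite mxE.
have Mx : M *m (\col_i w i) = d *: (\col_i w i).
  apply/colP => i; rewrite !mxE -Ew; apply: eq_bigr => j _.
  by rewrite mulrC (Msym i j); congr (_ * _); rewrite mxE.
by rewrite (pe n0 M0 _ Mx) // => i; rewrite mxE.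
Qed.


Lemma exists_u n (A : 'M[R]_n) lam : nonneg_mx A -> 0 < lam ->
  lam <= spectral_radius A ->
  exists u : 'I_n -> R, [/\ forall i, 0 <= u i, exists i, u i != 0 &
     forall j, lam * u j <= \sum_i u i * A i j].
Proof.
move=> A0 l0 lr; case: (bigmax_att (eigenvalues_C A)) => [E|[z zin E]].
  by move: lr; rewrite /spectral_radius E => /(lt_le_trans l0); rewrite ltxx.
have [v Hv v0] := eig_rowvec zin.
exists (fun i => Normc.normc (v 0 i)); split.
- by move=> i; exact: normc_ge0.
- have [j vj] := exists_nz v0; exists j.
  by apply: contra vj => /eqP/Normc.eq0_normc ->.
- move=> j; apply: le_trans (eig_abs A0 Hv j).
  by apply: ler_wpM2r; [exact: normc_ge0 | rewrite -E].
Qed.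

Lemma At_eq n (A : 'M[R]_n) (x : 'cV[R]_n) c t :
  A *m x = c *: x -> A^T *m x = c *: x ->
  ((1 - t) *: A + t *: A^T) *m x = c *: x.
Proof.
move=> Ax ATx; rewrite mulmxDl -!scalemxAl Ax ATx !scalerA -scalerDl.
by congr (_ *: _); ring.
Qed.

End Gen.

Theorem theorem6 (R : rcfType) (n : nat) (A : 'M[R]_n) :
  nonneg_mx A -> irreducible_mx A ->
  ((forall t s : R, 0 <= t <= 1 -> 0 <= s <= 1 ->
      spectral_radius ((1 - t) *: A + t *: A^T)
      = spectral_radius ((1 - s) *: A + s *: A^T))
   <->
   (forall x : 'cV[R]_n, perron_vector (A + A^T) x -> (A - A^T) *m x = 0)).
Proof.
move=> A0 irr; case: (posnP n) => [n0|n0].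
  subst n; split => _.
    by move=> x _; apply: flatmx0.
  move=> t s _ _.
  by rewrite [(1 - t) *: _ + _]flatmx0 [(1 - s) *: _ + _]flatmx0.
split.
- move=> Hc x [xpos Mx].
  set r := spectral_radius (A + A^T) in Mx.
  pose lam := 2^-1 * r.
  have l2 : lam + lam = r by rewrite /lam; field.
  have Bx : ((1 - 2^-1) *: A + 2^-1 *: A^T) *m x = lam *: x.
    have -> : (1 - 2^-1 : R) = 2^-1 by field.
    by rewrite -scalerDr -scalemxAl Mx scalerA.
  have x0 : x != 0.
    by apply/negP => /eqP x0; have := xpos (Ordinal n0); rewrite x0 mxE ltxx.
  have lr : lam <= spectral_radius A.
    have E0 : (1 - 0) *: A + 0 *: A^T = A by rewrite subr0 scale1r scale0r addr0.
    have := ge_eig x0 Bx; rewrite -(Hc 0) ?E0 //.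
    + by rewrite lexx ler01.
    + by rewrite invr_ge0 ler0n /= invf_le1 ?ler1n ?ltr0n.
  have Hx i : \sum_j (A i j + A j i) * x j 0 = (lam + lam) * x i 0.
    have := congr1 (fun M : 'M[R]_(n,1) => M i 0) Mx; rewrite !mxE l2 => <-.
    by apply: eq_bigr => j _; rewrite !mxE.
  have [u [u0 [i1 ui1] Hu]] : exists u : 'I_n -> R, [/\ forall i, 0 <= u i,
      exists i, u i != 0 & forall j, lam * u j <= \sum_i u i * A i j].
    case: (ltP 0 lam) => lp; first exact: exists_u.
    exists (fun i => x i 0); split.
    + by move=> i; apply: ltW.
    + by exists (Ordinal n0); rewrite gt_eqF.
    + move=> j; apply: (@le_trans _ _ 0).
        by rewrite mulr_le0_ge0 // ltW.
      by apply: sumr_ge0 => i _; rewrite mulr_ge0 // ltW.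
  have KA := key A0 irr xpos Hx u0 (ex_intro _ i1 ui1) Hu.
  apply/colP => i; rewrite !mxE.
  rewrite (eq_bigr (fun j => A i j * x j 0 - A j i * x j 0)); last first.
    by move=> j _; rewrite !mxE mulrBl.
  rewrite sumrB; apply/eqP; rewrite subr_eq0; apply/eqP.
  have := Hx i; rewrite (eq_bigr (fun j => A i j * x j 0 + A j i * x j 0)); last first.
    by move=> j _; rewrite mulrDl.
  rewrite big_split /=.
  have -> : \sum_j A j i * x j 0 = lam * x i 0.
    by rewrite -KA; apply: eq_bigr => j _; rewrite mulrC.
  move=> E; apply: (addIr (lam * x i 0)); rewrite E; ring.
- move=> H t s Ht Hs.
  have [x Px] := perron_exists n0 A0 irr.
  have E := H x Px; case: Px => xpos Mx.
  set r := spectral_radius (A + A^T) in Mx.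
  have AT : A^T *m x = A *m x.
    by apply/eqP; rewrite eq_sym -subr_eq0 -mulmxBl E.
  have Ax : A *m x = (2^-1 * r) *: x.
    have : A *m x + A *m x = r *: x by rewrite -{2}AT -mulmxDl.
    move=> Ex; rewrite -scalerA -Ex scalerDr -scalerDl.
    have -> : (2^-1 + 2^-1 : R) = 1 by field.
    by rewrite scale1r.
  have ATx : A^T *m x = (2^-1 * r) *: x by rewrite AT.
  have nn t' : 0 <= t' <= 1 -> nonneg_mx ((1 - t') *: A + t' *: A^T).
    case/andP => t1 t2 i j; rewrite !mxE addr_ge0 // mulr_ge0 //; first by rewrite subr_ge0.
  rewrite (pe n0 (nn _ Ht) xpos (At_eq t Ax ATx)).
  by rewrite (pe n0 (nn _ Hs) xpos (At_eq s Ax ATx)).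
Qed.
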